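(* Let $n\ge 8$. The meromorphic $2$-jet differential $xyz\Phi$ on the affine part of the Fermat surface $S_n$ extends to a holomorphic $2$-jet differential on all of $S_n$. Moreover, if $n\ge 9$, then $xyz\Phi$ vanishes along the ample divisor $S_n\cap\{W=0\}$ of $S_n$.
   Context: $S_n\subset\mathbb{P}^3$ is the smooth Fermat surface $X^n+Y^n+Z^n=W^n$ in homogeneous coordinates $[X:Y:Z:W]$; on its affine part $W\neq0$ use $x=X/W$, $y=Y/W$, $z=Z/W$, so $x^n+y^n+z^n=1$. For $F\in\{x,y,z\}$ let $dF,d^2F$ be the jet coordinates and $D^2F:=d^2F+\frac{n-1}{F}(dF)^2$. $\Phi$ is the meromorphic $2$-jet differential on the affine part given by $\Phi=\frac{dy\,D^2z-dz\,D^2y}{x^{n-1}}=\frac{dz\,D^2x-dx\,D^2z}{y^{n-1}}=\frac{dx\,D^2y-dy\,D^2x}{z^{n-1}}$ (these three expressions coincide there). A holomorphic $k$-jet differential on a complex manifold is an object which in local coordinates $z_1,\dots,z_N$ is a polynomial in the jet variables $d^\ell z_j$ ($1\le\ell\le k$) with holomorphic coefficients. *)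

(* Defs.v *)
(* Algebraic model of the Fermat surface S_n in P^3 over an
   arbitrary numeric algebraically closed field C (C itself is the intended
   instance). *)
From HB Require Import structures.
From mathcomp Require Import all_boot all_order all_algebra.
Set Implicit Arguments. Unset Strict Implicit. Unset Printing Implicit Defensive.
Import Order.TTheory GRing.Theory Num.Theory.
Local Open Scope ring_scope.

(* A 2-jet of a scalar function: (value, first derivative, second derivative). *)
Record jet (C : Type) := Jet { j0 : C; j1 : C; j2 : C }.

Section Jets.
Variable C : fieldType.
Definition jconst (c : C) : jet C := Jet c 0 0.
Definition jadd (f g : jet C) : jet C := Jet (j0 f + j0 g) (j1 f + j1 g) (j2 f + j2 g).
Definition jsub (f g : jet C) : jet C := Jet (j0 f - j0 g) (j1 f - j1 g) (j2 f - j2 g).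
(* Leibniz rule up to order 2 *)
Definition jmul (f g : jet C) : jet C :=
  Jet (j0 f * j0 g) (j1 f * j0 g + j0 f * j1 g)
      (j2 f * j0 g + 2%:R * j1 f * j1 g + j0 f * j2 g).
Definition jpow (n : nat) (f : jet C) : jet C := iter n (jmul f) (jconst 1).
(* jet of 1/g (meaningful when j0 g != 0) *)
Definition jinv (g : jet C) : jet C :=
  Jet (j0 g)^-1 (- j1 g / j0 g ^+ 2)
      (- j2 g / j0 g ^+ 2 + 2%:R * j1 g ^+ 2 / j0 g ^+ 3).
Definition jdiv (f g : jet C) : jet C := jmul f (jinv g).
End Jets.

Definition cX : 'I_4 := @Ordinal 4 0 isT.
Definition cY : 'I_4 := @Ordinal 4 1 isT.
Definition cZ : 'I_4 := @Ordinal 4 2 isT.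
Definition cW : 'I_4 := @Ordinal 4 3 isT.

Definition fermat_jet (C : fieldType) (n : nat) (J : 'I_4 -> jet C) : jet C :=
  jadd (jadd (jpow n (J cX)) (jpow n (J cY))) (jsub (jpow n (J cZ)) (jpow n (J cW))).

(* J is a 2-jet of a holomorphic curve in S_n, written in the affine chart
   {coordinate k != 0} (coordinate k normalised to the constant 1).  For the
   smooth surface S_n these are exactly the 2-jets of germs of curves in S_n. *)
Definition on_chart (C : fieldType) (n : nat) (k : 'I_4) (J : 'I_4 -> jet C) : Prop :=
  J k = jconst 1 /\ fermat_jet n J = jconst 0.

Definition chart_change (C : fieldType) (J : 'I_4 -> jet C) (m : 'I_4) : 'I_4 -> jet C :=
  fun j => jdiv (J j) (J m).

Definition base (C : fieldType) (J : 'I_4 -> jet C) : 'I_4 -> C := fun j => j0 (J j).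

Inductive pexpr (C : Type) :=
| PVar of nat
| PConst of C
| PAdd of pexpr C & pexpr C
| PMul of pexpr C & pexpr C.

Fixpoint peval (C : fieldType) (e : nat -> C) (p : pexpr C) : C :=
  match p with
  | PVar i => e i
  | PConst c => c
  | PAdd p q => peval e p + peval e q
  | PMul p q => peval e p * peval e q
  end.

Definition env_pt (C : fieldType) (p : 'I_4 -> C) : nat -> C :=
  fun i => if (i < 4)%N then p (inord i) else 0.
(* environment of all jet coordinates: variable 3*j+l is d^l of coordinate j *)
Definition env_jet (C : fieldType) (J : 'I_4 -> jet C) : nat -> C :=
  fun i => if (i < 12)%N then
             let f := J (inord (i %/ 3)) in
             if (i %% 3 == 0)%N then j0 f else if (i %% 3 == 1)%N then j1 f else j2 f
           else 0.

(* In chart k, Psi is a 2-jet differential with regular (holomorphic)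
   coefficients near the point p: on a neighbourhood {D != 0} of p it is a
   polynomial in the jet variables with coefficients N/D, N, D polynomial. *)
Definition regular_at (C : fieldType) (n : nat) (k : 'I_4)
  (psi : ('I_4 -> jet C) -> C) (p : 'I_4 -> C) : Prop :=
  exists (N D : pexpr C),
    peval (env_pt p) D != 0 /\
    forall J, on_chart n k J -> peval (env_pt (base J)) D != 0 ->
      peval (env_pt (base J)) D * psi J = peval (env_jet J) N.

(* A global holomorphic 2-jet differential on S_n, given by its expressions
   Psi k in the four affine charts {coordinate k != 0}: each is holomorphic
   at every point of its chart, and they agree on overlaps. *)
Definition holo_jet_diff (C : fieldType) (n : nat)
  (Psi : 'I_4 -> ('I_4 -> jet C) -> C) : Prop :=
  (forall k J, on_chart n k J -> regular_at n k (Psi k) (base J)) /\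
  (forall k m J, on_chart n k J -> j0 (J m) != 0 ->
     Psi k J = Psi m (chart_change J m)).

(* The meromorphic jet differential x y z Phi on the affine part W != 0, with
   x = X/W, y = Y/W, z = Z/W, D^2 F = d^2F + (n-1)/F (dF)^2 and
   Phi = (dy D^2 z - dz D^2 y) / x^(n-1). *)
Definition D2 (C : fieldType) (n : nat) (F : jet C) : C :=
  j2 F + (n.-1)%:R / j0 F * j1 F ^+ 2.
Definition Phi (C : fieldType) (n : nat) (J : 'I_4 -> jet C) : C :=
  (j1 (J cY) * D2 n (J cZ) - j1 (J cZ) * D2 n (J cY)) / j0 (J cX) ^+ n.-1.
Definition xyzPhi (C : fieldType) (n : nat) (J : 'I_4 -> jet C) : C :=
  j0 (J cX) * j0 (J cY) * j0 (J cZ) * Phi n J.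

(* Main.v *)
Require Import Defs.
From HB Require Import structures.
From mathcomp Require Import all_boot all_order all_algebra.
From mathcomp Require Import ring.
Set Implicit Arguments. Unset Strict Implicit. Unset Printing Implicit Defensive.
Import Order.TTheory GRing.Theory Num.Theory.
Local Open Scope ring_scope.

Section S.
Variable C : numClosedFieldType.
Implicit Types P Q R h : jet C.

Definition v0 P : C := j0 P ^+ 2.
Definition v1 (n:nat) P : C := n%:R * j0 P * j1 P.
Definition v2 (n:nat) P : C := n%:R * j0 P * j2 P + n%:R * (n.-1)%:R * j1 P ^+ 2.

Lemma jmul0 P Q : j0 (jmul P Q) = j0 P * j0 Q. Proof. by []. Qed.
Lemma jmul1 P Q : j1 (jmul P Q) = j1 P * j0 Q + j0 P * j1 Q. Proof. by []. Qed.
Lemma jmul2 P Q : j2 (jmul P Q) = j2 P * j0 Q + 2%:R * j1 P * j1 Q + j0 P * j2 Q. Proof. by []. Qed.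

Lemma jpowE N P : [/\ j0 (jpow N.+2 P) = j0 P ^+ N * v0 P,
  j1 (jpow N.+2 P) = j0 P ^+ N * v1 N.+2 P &
  j2 (jpow N.+2 P) = j0 P ^+ N * v2 N.+2 P].
Proof.
elim: N => [|N [e0 e1 e2]].
  rewrite /v0 /v1 /v2 /=; split; ring.
have -> : jpow N.+3 P = jmul P (jpow N.+2 P) by [].
rewrite jmul0 jmul1 jmul2 e0 e1 e2 /v0 /v1 /v2 /= !exprS; split; ring.
Qed.

Definition det3 (a0 a1 a2 b0 b1 b2 c0 c1 c2 : C) : C :=
  a0*(b1*c2 - b2*c1) - b0*(a1*c2 - a2*c1) + c0*(a1*b2 - a2*b1).
Definition MM n P Q R := det3 (v0 P) (v1 n P) (v2 n P) (v0 Q) (v1 n Q) (v2 n Q)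
  (v0 R) (v1 n R) (v2 n R).

Lemma six (sX sY sZ sW x0 x1 x2 y0 y1 y2 z0 z1 z2 w0 w1 w2 : C) :
  sX*x0 + sY*y0 + sZ*z0 - sW*w0 = 0 ->
  sX*x1 + sY*y1 + sZ*z1 - sW*w1 = 0 ->
  sX*x2 + sY*y2 + sZ*z2 - sW*w2 = 0 ->
  sZ * det3 x0 x1 x2 y0 y1 y2 z0 z1 z2 = sW * det3 x0 x1 x2 y0 y1 y2 w0 w1 w2/\
      sY * det3 x0 x1 x2 y0 y1 y2 z0 z1 z2 = sW * det3 x0 x1 x2 w0 w1 w2 z0 z1 z2/\
      sX * det3 x0 x1 x2 y0 y1 y2 z0 z1 z2 = sW * det3 w0 w1 w2 y0 y1 y2 z0 z1 z2/\
      sY * det3 x0 x1 x2 y0 y1 y2 w0 w1 w2 = sZ * det3 x0 x1 x2 w0 w1 w2 z0 z1 z2/\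
      sX * det3 x0 x1 x2 y0 y1 y2 w0 w1 w2 = sZ * det3 w0 w1 w2 y0 y1 y2 z0 z1 z2 /\
      sX * det3 x0 x1 x2 w0 w1 w2 z0 z1 z2 = sY * det3 w0 w1 w2 y0 y1 y2 z0 z1 z2.
Proof.
move=> r0 r1 r2.
set R0 := sX*x0 + sY*y0 + sZ*z0 - sW*w0 in r0.
set R1 := sX*x1 + sY*y1 + sZ*z1 - sW*w1 in r1.
set R2 := sX*x2 + sY*y2 + sZ*z2 - sW*w2 in r2.
(repeat match goal with |- _ /\ _ => split end); apply/eqP; rewrite -subr_eq0; apply/eqP.
- transitivity (det3 x0 x1 x2 y0 y1 y2 R0 R1 R2); first by rewrite /R0 /R1 /R2 /det3; ring.
  by rewrite r0 r1 r2 /det3; ring.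
- transitivity (det3 x0 x1 x2 R0 R1 R2 z0 z1 z2); first by rewrite /R0 /R1 /R2 /det3; ring.
  by rewrite r0 r1 r2 /det3; ring.
- transitivity (det3 R0 R1 R2 y0 y1 y2 z0 z1 z2); first by rewrite /R0 /R1 /R2 /det3; ring.
  by rewrite r0 r1 r2 /det3; ring.
- transitivity (det3 x0 x1 x2 R0 R1 R2 w0 w1 w2); first by rewrite /R0 /R1 /R2 /det3; ring.
  by rewrite r0 r1 r2 /det3; ring.
- transitivity (det3 R0 R1 R2 y0 y1 y2 w0 w1 w2); first by rewrite /R0 /R1 /R2 /det3; ring.
  by rewrite r0 r1 r2 /det3; ring.
- transitivity (det3 R0 R1 R2 w0 w1 w2 z0 z1 z2); first by rewrite /R0 /R1 /R2 /det3; ring.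
  by rewrite r0 r1 r2 /det3; ring.
Qed.

Lemma v0M P h : v0 (jmul P h) = j0 h ^+ 2 * v0 P.
Proof. by rewrite /v0 jmul0; ring. Qed.
Lemma v1M N P h : v1 N.+2 (jmul P h) =
  j0 h ^+ 2 * v1 N.+2 P + N.+2%:R * j0 h * j1 h * v0 P.
Proof. by rewrite /v0 /v1 jmul0 jmul1; ring. Qed.
Lemma v2M N P h : v2 N.+2 (jmul P h) =
  j0 h ^+ 2 * v2 N.+2 P + 2%:R * N.+2%:R * j0 h * j1 h * v1 N.+2 P
  + (N.+2%:R * j0 h * j2 h + N.+2%:R * N.+1%:R * j1 h ^+ 2) * v0 P.
Proof. by rewrite /v0 /v1 /v2 jmul0 jmul1 jmul2 /=; ring. Qed.

Lemma MMM N P Q R h : MM N.+2 (jmul P h) (jmul Q h) (jmul R h) = j0 h ^+ 6 * MM N.+2 P Q R.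
Proof. by rewrite /MM !v0M !v1M !v2M /det3; ring. Qed.

Lemma jadd0 P Q : j0 (jadd P Q) = j0 P + j0 Q. Proof. by []. Qed.
Lemma jadd1 P Q : j1 (jadd P Q) = j1 P + j1 Q. Proof. by []. Qed.
Lemma jadd2 P Q : j2 (jadd P Q) = j2 P + j2 Q. Proof. by []. Qed.
Lemma jsub0 P Q : j0 (jsub P Q) = j0 P - j0 Q. Proof. by []. Qed.
Lemma jsub1 P Q : j1 (jsub P Q) = j1 P - j1 Q. Proof. by []. Qed.
Lemma jsub2 P Q : j2 (jsub P Q) = j2 P - j2 Q. Proof. by []. Qed.

Lemma idents N k (J : 'I_4 -> jet C) : on_chart N.+2 k J ->
  let X := J cX in let Y := J cY in let Z := J cZ in let W := J cW in
  let sX := j0 X ^+ N in let sY := j0 Y ^+ N in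
  let sZ := j0 Z ^+ N in let sW := j0 W ^+ N in
  sZ * MM N.+2 X Y Z = sW * MM N.+2 X Y W /\
  sY * MM N.+2 X Y Z = sW * MM N.+2 X W Z /\
  sX * MM N.+2 X Y Z = sW * MM N.+2 W Y Z /\
  sY * MM N.+2 X Y W = sZ * MM N.+2 X W Z /\
  sX * MM N.+2 X Y W = sZ * MM N.+2 W Y Z /\
  sX * MM N.+2 X W Z = sY * MM N.+2 W Y Z.
Proof.
case=> _ hf X Y Z W sX sY sZ sW.
have h0 := congr1 (@j0 C) hf; have h1 := congr1 (@j1 C) hf; have h2 := congr1 (@j2 C) hf.
rewrite /fermat_jet !(jadd0, jadd1, jadd2, jsub0, jsub1, jsub2) in h0 h1 h2.
case: (jpowE N X) => x0 x1 x2; case: (jpowE N Y) => y0 y1 y2.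
case: (jpowE N Z) => z0 z1 z2; case: (jpowE N W) => w0 w1 w2.
rewrite -/X -/Y -/Z -/W x0 y0 z0 w0 in h0.
rewrite -/X -/Y -/Z -/W x1 y1 z1 w1 in h1.
rewrite -/X -/Y -/Z -/W x2 y2 z2 w2 in h2.
change (j0 (jconst (0:C))) with (0:C) in h0.
change (j1 (jconst (0:C))) with (0:C) in h1.
change (j2 (jconst (0:C))) with (0:C) in h2.
apply: six.
- by rewrite -h0 /sX /sY /sZ /sW; ring.
- by rewrite -h1 /sX /sY /sZ /sW; ring.
- by rewrite -h2 /sX /sY /sZ /sW; ring.
Qed.

Definition FW N (J : 'I_4 -> jet C) :=
  MM N.+2 (J cX) (J cY) (J cZ) / (N.+2%:R ^+ 2 * j0 (J cW) ^+ 6).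
Definition FZ N (J : 'I_4 -> jet C) :=
  j0 (J cW) ^+ (N - 6) * MM N.+2 (J cX) (J cY) (J cW) / (N.+2%:R ^+ 2 * j0 (J cZ) ^+ N).
Definition FY N (J : 'I_4 -> jet C) :=
  j0 (J cW) ^+ (N - 6) * MM N.+2 (J cX) (J cW) (J cZ) / (N.+2%:R ^+ 2 * j0 (J cY) ^+ N).
Definition FX N (J : 'I_4 -> jet C) :=
  j0 (J cW) ^+ (N - 6) * MM N.+2 (J cW) (J cY) (J cZ) / (N.+2%:R ^+ 2 * j0 (J cX) ^+ N).
Definition PsiF N (J : 'I_4 -> jet C) : C :=
  if j0 (J cW) != 0 then FW N J else if j0 (J cZ) != 0 then FZ N J
  else if j0 (J cY) != 0 then FY N J else FX N J.

Lemma nR_neq0 N : (N.+2%:R : C) ^+ 2 != 0.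
Proof. by rewrite expf_neq0 // pnatr_eq0. Qed.

Lemma n2nz N : (2 + N%:R : C) != 0.
Proof.
have -> : (2 + N%:R : C) = N.+2%:R by ring.
by rewrite pnatr_eq0.
Qed.

Ltac fin := repeat (apply/andP; split); rewrite ?n2nz ?expf_neq0 //.

Lemma PsiF_scale N (J : 'I_4 -> jet C) h : (6 <= N)%N -> j0 h != 0 ->
  PsiF N (fun j => jmul (J j) h) = PsiF N J.
Proof.
move=> hN hh; rewrite /PsiF /FW /FZ /FY /FX !jmul0 !MMM !mulf_eq0 (negbTE hh) !orbF.
have nz := nR_neq0 N.
have hpow : j0 h ^+ N = j0 h ^+ (N - 6) * j0 h ^+ 6 by rewrite -exprD subnK.
case: ifP => hW; first by rewrite !exprMn; field; fin.
case: ifP => hZ; first by rewrite !exprMn hpow; field; fin.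
case: ifP => hY; first by rewrite !exprMn hpow; field; fin.
case: (boolP (j0 (J cX) == 0)) => hX.
  by rewrite (eqP hX) mul0r !expr0n /= gtn_eqF ?(leq_trans _ hN) // !mulr0 !invr0 !mulr0.
by rewrite !exprMn hpow; field; fin.
Qed.

Lemma agree (k d e M1 M2 : C) : k != 0 -> e != 0 -> d * M1 = e * M2 ->
  k * d * (M1 / (k * e)) = M2.
Proof. move=> hk he h; apply: (mulfI he); rewrite -h; field; fin. Qed.

Fixpoint ppow (p : pexpr C) (m : nat) : pexpr C :=
  if m is m'.+1 then PMul p (ppow p m') else PConst 1.
Definition psub (a b : pexpr C) := PAdd a (PMul (PConst (-1)) b).
Definition pdet3 (a0 a1 a2 b0 b1 b2 c0 c1 c2 : pexpr C) : pexpr C :=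
  PAdd (psub (PMul a0 (psub (PMul b1 c2) (PMul b2 c1)))
             (PMul b0 (psub (PMul a1 c2) (PMul a2 c1))))
       (PMul c0 (psub (PMul a1 b2) (PMul a2 b1))).
Definition pv0 b : pexpr C := PMul (PVar C b) (PVar C b).
Definition pv1 (n b : nat) : pexpr C := PMul (PMul (PConst n%:R) (PVar C b)) (PVar C b.+1).
Definition pv2 (n b : nat) : pexpr C :=
  PAdd (PMul (PMul (PConst n%:R) (PVar C b)) (PVar C b.+2))
       (PMul (PMul (PConst n%:R) (PConst (n.-1)%:R)) (ppow (PVar C b.+1) 2)).
Definition pMM n a b c := pdet3 (pv0 a) (pv1 n a) (pv2 n a) (pv0 b) (pv1 n b) (pv2 n b)
  (pv0 c) (pv1 n c) (pv2 n c).

Lemma peval_ppow e p m : peval e (ppow p m) = peval e p ^+ m.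
Proof. by elim: m => [|m IH] //=; rewrite IH exprS. Qed.

Definition blk (e : nat -> C) b := Jet (e b) (e b.+1) (e b.+2).

Lemma peval_pMM e n a b c : peval e (pMM n a b c) = MM n (blk e a) (blk e b) (blk e c).
Proof.
rewrite /pMM /pdet3 /psub /pv0 /pv1 /pv2 /= ?peval_ppow /MM /det3 /v0 /v1 /v2 /blk /=.
ring.
Qed.

Lemma jetE P : Jet (j0 P) (j1 P) (j2 P) = P. Proof. by case: P. Qed.
Lemma iX : (inord 0 : 'I_4) = cX. Proof. by apply/val_inj; rewrite /= inordK. Qed.
Lemma iY : (inord 1 : 'I_4) = cY. Proof. by apply/val_inj; rewrite /= inordK. Qed.
Lemma iZ : (inord 2 : 'I_4) = cZ. Proof. by apply/val_inj; rewrite /= inordK. Qed.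
Lemma iW : (inord 3 : 'I_4) = cW. Proof. by apply/val_inj; rewrite /= inordK. Qed.

Lemma blkX (J : 'I_4 -> jet C) : blk (env_jet J) 0 = J cX.
Proof. by rewrite -[RHS]jetE -iX. Qed.
Lemma blkY (J : 'I_4 -> jet C) : blk (env_jet J) 3 = J cY.
Proof. by rewrite -[RHS]jetE -iY. Qed.
Lemma blkZ (J : 'I_4 -> jet C) : blk (env_jet J) 6 = J cZ.
Proof. by rewrite -[RHS]jetE -iZ. Qed.
Lemma blkW (J : 'I_4 -> jet C) : blk (env_jet J) 9 = J cW.
Proof. by rewrite -[RHS]jetE -iW. Qed.
Lemma eW (J : 'I_4 -> jet C) : env_jet J 9 = j0 (J cW).
Proof. by rewrite -iW. Qed.

Lemma ptX (J : 'I_4 -> jet C) : env_pt (base J) 0 = j0 (J cX). Proof. by rewrite -iX. Qed.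
Lemma ptY (J : 'I_4 -> jet C) : env_pt (base J) 1 = j0 (J cY). Proof. by rewrite -iY. Qed.
Lemma ptZ (J : 'I_4 -> jet C) : env_pt (base J) 2 = j0 (J cZ). Proof. by rewrite -iZ. Qed.
Lemma ptW (J : 'I_4 -> jet C) : env_pt (base J) 3 = j0 (J cW). Proof. by rewrite -iW. Qed.

Lemma pevD e c i m : peval e (PMul (PConst c) (ppow (PVar C i) m)) = c * e i ^+ m.
Proof. by rewrite /= peval_ppow. Qed.
Lemma pevN e i m p : peval e (PMul (ppow (PVar C i) m) p) = e i ^+ m * peval e p.
Proof. by rewrite /= peval_ppow. Qed.

Lemma nzD (c x : C) m : (0 < m)%N -> c * x ^+ m != 0 -> x != 0.
Proof. by move=> hm; rewrite mulf_eq0 negb_or expf_eq0 hm => /andP [_]. Qed.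

Lemma coordP (n : nat) k (J : 'I_4 -> jet C) : on_chart n k J ->
  j0 (J cW) = 0 -> j0 (J cZ) = 0 -> j0 (J cY) = 0 -> j0 (J cX) != 0.
Proof.
case=> hk _ hW hZ hY.
have h1 : j0 (J k) = 1 by rewrite hk.
have : k = cX \/ k = cY \/ k = cZ \/ k = cW.
  case: k {hk h1} => [[|[|[|[|m]]]] Hk]; try by [].
  - by left; apply/val_inj.
  - by right; left; apply/val_inj.
  - by right; right; left; apply/val_inj.
  - by right; right; right; apply/val_inj.
case=> [E|[E|[E|E]]]; rewrite E in h1; rewrite ?h1 ?oner_eq0 //;
  by move: h1; rewrite ?hW ?hZ ?hY => /eqP; rewrite eq_sym oner_eq0.
Qed.

Lemma regP N k (J : 'I_4 -> jet C) : (6 <= N)%N -> on_chart N.+2 k J ->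
  regular_at N.+2 k (PsiF N) (base J).
Proof.
move=> hN hJ.
have nz := nR_neq0 N.
have N0 : (0 < N)%N by apply: leq_trans hN.
have hWp : forall J' : 'I_4 -> jet C, j0 (J' cW) != 0 ->
   j0 (J' cW) ^+ N = j0 (J' cW) ^+ 6 * j0 (J' cW) ^+ (N - 6).
  by move=> J' _; rewrite -exprD subnKC.
case: (boolP (j0 (J cW) == 0)) => hW0.
2: { exists (pMM N.+2 0 3 6), (PMul (PConst (N.+2%:R ^+ 2)) (ppow (PVar C 3) 6)).
  rewrite pevD ptW; split; first by rewrite mulf_neq0 // expf_neq0.
  move=> J' hJ'; rewrite pevD ptW peval_pMM blkX blkY blkZ => hD.
  have hW' := @nzD _ _ 6 isT hD.
  rewrite /PsiF hW' /FW; field; fin. }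
case: (boolP (j0 (J cZ) == 0)) => hZ0.
2: { exists (PMul (ppow (PVar C 9) (N - 6)) (pMM N.+2 0 3 9)),
     (PMul (PConst (N.+2%:R ^+ 2)) (ppow (PVar C 2) N)).
  rewrite pevD ptZ; split; first by rewrite mulf_neq0 // expf_neq0.
  move=> J' hJ'; rewrite pevD ptZ pevN peval_pMM blkX blkY blkW eW => hD.
  have hZ' := nzD N0 hD.
  have [IZ [IY [IX [YZ [XZ XY]]]]] := idents hJ'.
  rewrite /PsiF hZ'; case: ifP => hW'.
    apply: agree => //; first by rewrite expf_neq0.
    by rewrite IZ (hWp _ hW') mulrA.
  by apply: agree => //; rewrite expf_neq0. }
case: (boolP (j0 (J cY) == 0)) => hY0.
2: { exists (PMul (ppow (PVar C 9) (N - 6)) (pMM N.+2 0 9 6)),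
     (PMul (PConst (N.+2%:R ^+ 2)) (ppow (PVar C 1) N)).
  rewrite pevD ptY; split; first by rewrite mulf_neq0 // expf_neq0.
  move=> J' hJ'; rewrite pevD ptY pevN peval_pMM blkX blkZ blkW eW => hD.
  have hY' := nzD N0 hD.
  have [IZ [IY [IX [YZ [XZ XY]]]]] := idents hJ'.
  rewrite /PsiF hY'; case: ifP => hW'.
    apply: agree => //; first by rewrite expf_neq0.
    by rewrite IY (hWp _ hW') mulrA.
  case: ifP => hZ'.
    apply: agree => //; first by rewrite expf_neq0.
    by rewrite mulrCA YZ mulrCA.
  by apply: agree => //; rewrite expf_neq0. }
have hX0 := coordP hJ (eqP hW0) (eqP hZ0) (eqP hY0).
exists (PMul (ppow (PVar C 9) (N - 6)) (pMM N.+2 9 3 6)),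
     (PMul (PConst (N.+2%:R ^+ 2)) (ppow (PVar C 0) N)).
rewrite pevD ptX; split; first by rewrite mulf_neq0 // expf_neq0.
move=> J' hJ'; rewrite pevD ptX pevN peval_pMM blkY blkZ blkW eW => hD.
have hX' := nzD N0 hD.
have [IZ [IY [IX [YZ [XZ XY]]]]] := idents hJ'.
rewrite /PsiF; case: ifP => hW'.
  apply: agree => //; first by rewrite expf_neq0.
  by rewrite IX (hWp _ hW') mulrA.
case: ifP => hZ'.
  apply: agree => //; first by rewrite expf_neq0.
  by rewrite mulrCA XZ mulrCA.
case: ifP => hY'.
  apply: agree => //; first by rewrite expf_neq0.
  by rewrite mulrCA XY mulrCA.
by apply: agree => //; rewrite expf_neq0.
Qed.

Lemma chartW N (J : 'I_4 -> jet C) : on_chart N.+2 cW J ->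
  j0 (J cX) * j0 (J cY) * j0 (J cZ) != 0 -> PsiF N J = xyzPhi N.+2 J.
Proof.
move=> hJ hxyz.
have [_ [_ [IX _]]] := idents hJ.
case: hJ => hw _.
have E : forall P Q, MM N.+2 (jconst 1) P Q = v1 N.+2 P * v2 N.+2 Q - v2 N.+2 P * v1 N.+2 Q.
  move=> P Q.
  have c0 : v0 (jconst (1:C)) = 1 by rewrite /v0 /= expr1n.
  have c1 : v1 N.+2 (jconst (1:C)) = 0 by rewrite /v1 /= mulr0.
  have c2 : v2 N.+2 (jconst (1:C)) = 0 by rewrite /v2 /= !mulr0 expr0n /= mulr0 addr0.
  by rewrite /MM c0 c1 c2 /det3; ring.
rewrite hw E expr1n mul1r in IX.
rewrite !mulf_eq0 !negb_or in hxyz; case/andP: hxyz => /andP [hx hy] hz.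
have hxN : j0 (J cX) ^+ N != 0 by rewrite expf_neq0.
rewrite /PsiF hw /= oner_neq0 /FW.
have -> : MM N.+2 (J cX) (J cY) (J cZ) = (j0 (J cX) ^+ N)^-1 * (j0 (J cX) ^+ N * MM N.+2 (J cX) (J cY) (J cZ)).
  by rewrite mulKf.
rewrite IX /xyzPhi /Phi /D2 /v1 /v2 /= hw /= (exprS (j0 (J cX)) N).
move: hxN; set xN := j0 (J cX) ^+ N => hxN.
field; fin.
Qed.

Lemma vanish N (J : 'I_4 -> jet C) : (7 <= N)%N -> j0 (J cW) = 0 -> PsiF N J = 0.
Proof.
move=> h7 hW.
have e : (0 : C) ^+ (N - 6) = 0 by rewrite expr0n subn_eq0 leqNgt h7.
by rewrite /PsiF /FZ /FY /FX hW eqxx /= e !mul0r !if_same.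
Qed.
End S.

Theorem lemma4p2 (C : numClosedFieldType) (n : nat) (hn : (8 <= n)%N) :
  exists Psi : 'I_4 -> ('I_4 -> jet C) -> C,
    holo_jet_diff n Psi /\
    (forall J, on_chart n cW J ->
       j0 (J cX) * j0 (J cY) * j0 (J cZ) != 0 -> Psi cW J = xyzPhi n J) /\
    ((9 <= n)%N -> forall k J, on_chart n k J -> j0 (J cW) = 0 -> Psi k J = 0).
Proof.
case: n hn => [|[|N]] // hn.
have hN : (6 <= N)%N by [].
exists (fun _ => PsiF N); split; [split|split].
- by move=> k J hJ; apply: regP.
- move=> k m J hJ hm.
  rewrite /chart_change /jdiv; symmetry; apply: PsiF_scale => //.
  by rewrite /= invr_eq0.
- by move=> J hJ hxyz; apply: chartW.
- by move=> h9 k J hJ hW; apply: vanish.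
Qed.
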